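(* Let $M$ be a free $\mathbb{D}$-module with a finite $\mathbb{D}$-basis $\{\widehat m_1,\dots,\widehat m_n\}$, $V=\{\sum_l x_l\widehat m_l: x_l\in\mathbb{R}\}$, and $(\cdot,\cdot)$ a hyperbolic scalar product on $M$ which is hyperbolic positive and closed on $V$. Let $\widehat X,\widehat Y\in M$ with $\widehat X_{\mathbf{e_k}},\widehat Y_{\mathbf{e_k}}\ne0$ for $k=1,2$, and let $\theta_k\in[0,\pi]$ be the angle between $\widehat X_{\mathbf{e_k}}$ and $\widehat Y_{\mathbf{e_k}}$ in the real inner product space $V$, i.e. $\cos\theta_k=(\widehat X_{\mathbf{e_k}},\widehat Y_{\mathbf{e_k}})/(\|\widehat X_{\mathbf{e_k}}\|\,\|\widehat Y_{\mathbf{e_k}}\|)$. Then $$\cos\Big(\frac{\theta_1+\theta_2}{2}+\frac{\theta_1-\theta_2}{2}\mathbf{j}\Big)=\frac{(\widehat X,\widehat Y)}{(\widehat X,\widehat X)^{1/2}(\widehat Y,\widehat Y)^{1/2}}.$$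
   Context: Hyperbolic numbers: $\mathbb{D}=\{x+y\mathbf{j}: x,y\in\mathbb{R}\}$ with $\mathbf{j}^2=1$, a commutative ring. Idempotents $\mathbf{e_1}=(1+\mathbf{j})/2$, $\mathbf{e_2}=(1-\mathbf{j})/2$, with $\mathbf{e_1}^2=\mathbf{e_1}$, $\mathbf{e_2}^2=\mathbf{e_2}$, $\mathbf{e_1}\mathbf{e_2}=0$, $\mathbf{e_1}+\mathbf{e_2}=1$; every hyperbolic number is uniquely $a\mathbf{e_1}+b\mathbf{e_2}$ with $a,b\in\mathbb{R}$. $\mathbb{D}^+=\{a\mathbf{e_1}+b\mathbf{e_2}: a,b\ge0\}$, and $(a\mathbf{e_1}+b\mathbf{e_2})^{1/2}=\sqrt a\,\mathbf{e_1}+\sqrt b\,\mathbf{e_2}$. The cosine of $w\in\mathbb{D}$ is $\cos w=\sum_{n\ge0}(-1)^nw^{2n}/(2n)!$. For $\widehat X=\sum_l x_l\widehat m_l\in M$ with $x_l=x_{1l}\mathbf{e_1}+x_{2l}\mathbf{e_2}$, $x_{kl}\in\mathbb{R}$, put $\widehat X_{\mathbf{e_k}}=\sum_l x_{kl}\widehat m_l\in V$. A hyperbolic scalar product is a map $(\cdot,\cdot):M\times M\to\mathbb{D}$ with $(\widehat X,\widehat Y_1+\widehat Y_2)=(\widehat X,\widehat Y_1)+(\widehat X,\widehat Y_2)$, $(\widehat X,\alpha\widehat Y)=\alpha(\widehat X,\widehat Y)$ for $\alpha\in\mathbb{D}$, $(\widehat X,\widehat Y)=(\widehat Y,\widehat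 X)$, and $(\widehat X,\widehat X)=0\iff\widehat X=0$; it is hyperbolic positive if $(\widehat X,\widehat X)\in\mathbb{D}^+$ for all $\widehat X\in M$, and closed on $V$ if $(\widehat X,\widehat Y)\in\mathbb{R}$ for all $\widehat X,\widehat Y\in V$. For $\widehat Z\in V$, $\|\widehat Z\|=(\widehat Z,\widehat Z)^{1/2}$. *)

(* Defs.v *)
From Stdlib Require Import Reals Factorial.
From Coquelicot Require Import Coquelicot.
From mathcomp Require fintype.
Open Scope R_scope.
Set Implicit Arguments.

(* Hyperbolic numbers x + y j, j^2 = 1 *)
Record D := mkD { Dre : R; Dhy : R }.

Definition Dzero : D := mkD 0 0.
Definition Done : D := mkD 1 0.
Definition Dadd (a b : D) : D := mkD (Dre a + Dre b) (Dhy a + Dhy b).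
Definition Dmul (a b : D) : D :=
  mkD (Dre a * Dre b + Dhy a * Dhy b) (Dre a * Dhy b + Dhy a * Dre b).
(* inverse: (x + y j)^-1 = (x - y j)/(x^2 - y^2)  (meaningful when x^2 <> y^2) *)
Definition Dinv (a : D) : D :=
  mkD (Dre a / (Dre a * Dre a - Dhy a * Dhy a))
      (- Dhy a / (Dre a * Dre a - Dhy a * Dhy a)).
Definition Ddiv (a b : D) : D := Dmul a (Dinv b).
Definition Dreal (r : R) : D := mkD r 0.

Fixpoint Dpow (w : D) (k : nat) : D :=
  match k with O => Done | S k' => Dmul w (Dpow w k') end.

(* idempotent coordinates: w = a e1 + b e2 with a = x + y, b = x - y *)
Definition De1 (w : D) : R := Dre w + Dhy w.
Definition De2 (w : D) : R := Dre w - Dhy w.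
Definition Dpos (w : D) : Prop := 0 <= De1 w /\ 0 <= De2 w.
(* (a e1 + b e2)^{1/2} = sqrt a e1 + sqrt b e2 *)
Definition Dsqrt (w : D) : D :=
  mkD ((sqrt (De1 w) + sqrt (De2 w)) / 2) ((sqrt (De1 w) - sqrt (De2 w)) / 2).

Definition Dcos_term (w : D) (k : nat) : D :=
  let c := (-1) ^ k / INR (Factorial.fact (2 * k)%nat) in
  mkD (c * Dre (Dpow w (2 * k)%nat)) (c * Dhy (Dpow w (2 * k)%nat)).
Definition Dcos (w : D) : D :=
  mkD (Series (fun k => Dre (Dcos_term w k))) (Series (fun k => Dhy (Dcos_term w k))).

(* The free D-module M with basis m_1..m_n, elements given by coordinates *)
Definition Mvec (n : nat) := fintype.ordinal n -> D.
Definition Mzero (n : nat) : Mvec n := fun _ => Dzero.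
Definition Madd (n : nat) (X Y : Mvec n) : Mvec n := fun l => Dadd (X l) (Y l).
Definition Mscale (n : nat) (a : D) (X : Mvec n) : Mvec n := fun l => Dmul a (X l).
(* V = real span of the basis *)
Definition inV (n : nat) (X : Mvec n) : Prop := forall l, Dhy (X l) = 0.
(* X_{e_k} = sum_l x_{kl} m_l *)
Definition Mproj1 (n : nat) (X : Mvec n) : Mvec n := fun l => Dreal (De1 (X l)).
Definition Mproj2 (n : nat) (X : Mvec n) : Mvec n := fun l => Dreal (De2 (X l)).

Definition hyp_scalar_product (n : nat) (sp : Mvec n -> Mvec n -> D) : Prop :=
  (forall X Y1 Y2, sp X (Madd Y1 Y2) = Dadd (sp X Y1) (sp X Y2)) /\
  (forall X Y a, sp X (Mscale a Y) = Dmul a (sp X Y)) /\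
  (forall X Y, sp X Y = sp Y X) /\
  (forall X, sp X X = Dzero <-> X = @Mzero n).

Definition hyp_positive (n : nat) (sp : Mvec n -> Mvec n -> D) : Prop :=
  forall X, Dpos (sp X X).

Definition closed_on_V (n : nat) (sp : Mvec n -> Mvec n -> D) : Prop :=
  forall X Y, inV X -> inV Y -> Dhy (sp X Y) = 0.

Definition Mnorm (n : nat) (sp : Mvec n -> Mvec n -> D) (Z : Mvec n) : D :=
  Dsqrt (sp Z Z).

(* Main.v *)
From Stdlib Require Import Reals Lra Lia FunctionalExtensionality.
From Coquelicot Require Import Coquelicot.
From mathcomp Require fintype.
Require Import Defs.
Open Scope R_scope.
Set Implicit Arguments.

Lemma cos_series (x : R) :
  is_series (fun k => (-1) ^ k / INR (Factorial.fact (2 * k)) * x ^ (2 * k)) (cos x).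
Proof.
  apply is_series_Reals. unfold cos. destruct (exist_cos (Rsqr x)) as [l Hl].
  unfold cos_in in Hl.
  intros eps He. destruct (Hl eps He) as [N HN]. exists N. intros m Hm.
  replace (sum_f_R0 _ m) with (sum_f_R0 (fun i => cos_n i * (Rsqr x) ^ i) m).
  apply HN; auto.
  apply sum_eq. intros i _. unfold cos_n, Rsqr. rewrite pow_mult.
  f_equal. f_equal. ring.
Qed.

Lemma Dpow_e (w : Defs.D) m : De1 (Dpow w m) = De1 w ^ m /\ De2 (Dpow w m) = De2 w ^ m.
Proof.
  induction m as [|m [IH1 IH2]]; unfold De1, De2 in *; simpl. split; ring.
  rewrite <- IH1, <- IH2. split; ring.
Qed.

Lemma Dpow_re (w : Defs.D) m : Dre (Dpow w m) = (De1 w ^ m + De2 w ^ m) / 2.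
Proof. destruct (Dpow_e w m) as [A B]. rewrite <- A, <- B. unfold De1, De2. field. Qed.
Lemma Dpow_hy (w : Defs.D) m : Dhy (Dpow w m) = (De1 w ^ m - De2 w ^ m) / 2.
Proof. destruct (Dpow_e w m) as [A B]. rewrite <- A, <- B. unfold De1, De2. field. Qed.

Lemma D_ext (a b : Defs.D) : De1 a = De1 b -> De2 a = De2 b -> a = b.
Proof.
  destruct a as [x y], b as [u v]; unfold De1, De2; simpl; intros.
  f_equal; lra.
Qed.

Lemma Dcos_e (w : Defs.D) : De1 (Dcos w) = cos (De1 w) /\ De2 (Dcos w) = cos (De2 w).
Proof.
  set (c := fun k => (-1) ^ k / INR (Factorial.fact (2 * k))).
  assert (H1 := cos_series (De1 w)). assert (H2 := cos_series (De2 w)).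
  assert (Hre : Series (fun k => Dre (Dcos_term w k)) = (cos (De1 w) + cos (De2 w)) / 2).
  { apply is_series_unique.
    assert (H := is_series_scal (/2) _ _ (is_series_plus _ _ _ _ H1 H2)).
    assert (E: scal (/2) (plus (cos (De1 w)) (cos (De2 w))) = (cos (De1 w) + cos (De2 w))/2) by (unfold scal, plus; simpl; unfold mult, plus; simpl; field).
    rewrite <- E.
    eapply is_series_ext; [|exact H]. intros k. simpl. unfold Dcos_term.
    simpl. rewrite Dpow_re. unfold scal, plus; simpl. unfold mult, plus; simpl. unfold Rdiv; ring. }
  assert (Hhy : Series (fun k => Dhy (Dcos_term w k)) = (cos (De1 w) - cos (De2 w)) / 2).
  { apply is_series_unique.
    assert (H := is_series_scal (/2) _ _ (is_series_minus _ _ _ _ H1 H2)).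
    assert (E: scal (/2) (minus (cos (De1 w)) (cos (De2 w))) = (cos (De1 w) - cos (De2 w))/2) by (unfold scal, minus, plus, opp; simpl; unfold mult, plus, opp; simpl; field).
    rewrite <- E.
    eapply is_series_ext; [|exact H]. intros k. simpl. unfold Dcos_term.
    simpl. rewrite Dpow_hy. unfold scal, minus, plus, opp; simpl. unfold mult, plus, opp; simpl. unfold Rdiv; ring. }
  split; [unfold De1 at 1 | unfold De2 at 1]; unfold Dcos; cbn [Dre Dhy]; rewrite Hre, Hhy; field.
Qed.

Lemma De1_mul a b : De1 (Dmul a b) = De1 a * De1 b.
Proof. unfold De1; simpl; ring. Qed.
Lemma De2_mul a b : De2 (Dmul a b) = De2 a * De2 b.
Proof. unfold De2; simpl; ring. Qed.
Lemma De1_add a b : De1 (Dadd a b) = De1 a + De1 b.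
Proof. unfold De1; simpl; ring. Qed.
Lemma De2_add a b : De2 (Dadd a b) = De2 a + De2 b.
Proof. unfold De2; simpl; ring. Qed.
Lemma De1_inv a : De1 a <> 0 -> De2 a <> 0 -> De1 (Dinv a) = / De1 a.
Proof.
  unfold De1, De2; simpl; intros.
  assert (Dre a * Dre a - Dhy a * Dhy a = (Dre a + Dhy a) * (Dre a - Dhy a)) as E by ring.
  rewrite E. field; auto.
Qed.
Lemma De2_inv a : De1 a <> 0 -> De2 a <> 0 -> De2 (Dinv a) = / De2 a.
Proof.
  unfold De1, De2; simpl; intros.
  assert (Dre a * Dre a - Dhy a * Dhy a = (Dre a + Dhy a) * (Dre a - Dhy a)) as E by ring.
  rewrite E. field; auto.
Qed.
Lemma De1_sqrt w : De1 (Dsqrt w) = sqrt (De1 w).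
Proof. unfold Dsqrt at 1. unfold De1 at 1. simpl. field. Qed.
Lemma De2_sqrt w : De2 (Dsqrt w) = sqrt (De2 w).
Proof. unfold Dsqrt at 1. unfold De2 at 1. simpl. field. Qed.
Lemma De1_real r : De1 (Dreal r) = r.
Proof. unfold De1; simpl; ring. Qed.
Lemma De2_real r : De2 (Dreal r) = r.
Proof. unfold De2; simpl; ring. Qed.

Definition E1 : Defs.D := mkD (1/2) (1/2).
Definition E2 : Defs.D := mkD (1/2) (-1/2).

Lemma decomp n (X : Mvec n) : X = Madd (Mscale E1 (Mproj1 X)) (Mscale E2 (Mproj2 X)).
Proof.
  apply functional_extensionality; intro l. unfold Madd, Mscale, Mproj1, Mproj2.
  apply D_ext.
  - rewrite De1_add, !De1_mul, !De1_real. unfold De1, E1, E2; simpl. field.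
  - rewrite De2_add, !De2_mul, !De2_real. unfold De2, E1, E2; simpl. field.
Qed.

Lemma inV1 n (X : Mvec n) : inV (Mproj1 X).
Proof. intro l. reflexivity. Qed.
Lemma inV2 n (X : Mvec n) : inV (Mproj2 X).
Proof. intro l. reflexivity. Qed.

Lemma sp_e n (sp : Mvec n -> Mvec n -> Defs.D)
  (Hsp : hyp_scalar_product sp) (HV : closed_on_V sp) X Y :
  De1 (sp X Y) = Dre (sp (Mproj1 X) (Mproj1 Y)) /\
  De2 (sp X Y) = Dre (sp (Mproj2 X) (Mproj2 Y)).
Proof.
  destruct Hsp as [Hadd [Hsc [Hsym _]]].
  assert (HY : sp X Y = Dadd (Dmul E1 (sp X (Mproj1 Y))) (Dmul E2 (sp X (Mproj2 Y)))).
  { rewrite (decomp Y) at 1. rewrite Hadd, !Hsc. reflexivity. }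
  assert (HX : forall Z, sp X Z = Dadd (Dmul E1 (sp (Mproj1 X) Z)) (Dmul E2 (sp (Mproj2 X) Z))).
  { intro Z. rewrite Hsym, (decomp X) at 1. rewrite Hadd, !Hsc, (Hsym Z), (Hsym Z). reflexivity. }
  rewrite HY, !HX.
  assert (E11 : De1 E1 = 1) by (unfold De1, E1; simpl; field).
  assert (E12 : De2 E1 = 0) by (unfold De2, E1; simpl; field).
  assert (E21 : De1 E2 = 0) by (unfold De1, E2; simpl; field).
  assert (E22 : De2 E2 = 1) by (unfold De2, E2; simpl; field).
  rewrite De1_add, De2_add, !De1_mul, !De2_mul, !De1_add, !De2_add, !De1_mul, !De2_mul.
  rewrite E11, E12, E21, E22.
  unfold De1 at 1. unfold De2 at 4.
  rewrite (HV (Mproj1 X) (Mproj1 Y) (inV1 X) (inV1 Y)).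
  rewrite (HV (Mproj2 X) (Mproj2 Y) (inV2 X) (inV2 Y)).
  split; ring.
Qed.

Lemma q_pos n (sp : Mvec n -> Mvec n -> D)
  (Hsp : hyp_scalar_product sp) (Hpos : hyp_positive sp) (HV : closed_on_V sp) X :
  (Mproj1 X <> @Mzero n -> 0 < De1 (sp X X)) /\ (Mproj2 X <> @Mzero n -> 0 < De2 (sp X X)).
Proof.
  destruct (sp_e Hsp HV X X) as [A B]. destruct (Hpos X) as [P1 P2].
  destruct Hsp as [_ [_ [_ Hz]]].
  split; intro Hn.
  - destruct (Rle_lt_or_eq_dec _ _ P1) as [h|h]; auto. exfalso. apply Hn.
    apply Hz. rewrite A in h.
    assert (Hh := HV _ _ (inV1 X) (inV1 X)).
    destruct (sp (Mproj1 X) (Mproj1 X)) as [a b]. simpl in *. unfold Dzero. f_equal; congruence.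
  - destruct (Rle_lt_or_eq_dec _ _ P2) as [h|h]; auto. exfalso. apply Hn.
    apply Hz. rewrite B in h.
    assert (Hh := HV _ _ (inV2 X) (inV2 X)).
    destruct (sp (Mproj2 X) (Mproj2 X)) as [a b]. simpl in *. unfold Dzero. f_equal; congruence.
Qed.

Theorem mainTheorem12 (n : nat) (sp : Mvec n -> Mvec n -> D)
  (Hsp : hyp_scalar_product sp) (Hpos : hyp_positive sp) (HV : closed_on_V sp)
  (X Y : Mvec n)
  (HX1 : Mproj1 X <> @Mzero n) (HX2 : Mproj2 X <> @Mzero n)
  (HY1 : Mproj1 Y <> @Mzero n) (HY2 : Mproj2 Y <> @Mzero n)
  (th1 th2 : R)
  (Hth1 : 0 <= th1 <= PI) (Hth2 : 0 <= th2 <= PI)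
  (Hcos1 : Dreal (cos th1) =
           Ddiv (sp (Mproj1 X) (Mproj1 Y)) (Dmul (Mnorm sp (Mproj1 X)) (Mnorm sp (Mproj1 Y))))
  (Hcos2 : Dreal (cos th2) =
           Ddiv (sp (Mproj2 X) (Mproj2 Y)) (Dmul (Mnorm sp (Mproj2 X)) (Mnorm sp (Mproj2 Y)))) :
  Dcos (mkD ((th1 + th2) / 2) ((th1 - th2) / 2)) =
  Ddiv (sp X Y) (Dmul (Dsqrt (sp X X)) (Dsqrt (sp Y Y))).
Proof.
  destruct (q_pos Hsp Hpos HV X) as [qx1 qx2].
  destruct (q_pos Hsp Hpos HV Y) as [qy1 qy2].
  specialize (qx1 HX1). specialize (qx2 HX2). specialize (qy1 HY1). specialize (qy2 HY2).
  destruct (sp_e Hsp HV X X) as [AX BX].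
  destruct (sp_e Hsp HV Y Y) as [AY BY].
  destruct (sp_e Hsp HV X Y) as [AXY BXY].
  assert (HVx1 := HV _ _ (inV1 X) (inV1 X)). assert (HVx2 := HV _ _ (inV2 X) (inV2 X)).
  assert (HVy1 := HV _ _ (inV1 Y) (inV1 Y)). assert (HVy2 := HV _ _ (inV2 Y) (inV2 Y)).
  assert (HVxy1 := HV _ _ (inV1 X) (inV1 Y)). assert (HVxy2 := HV _ _ (inV2 X) (inV2 Y)).
  assert (Hre : forall w, Dhy w = 0 -> De1 w = Dre w /\ De2 w = Dre w).
  { intros w h; unfold De1, De2; rewrite h; split; ring. }
  assert (sx1 := sqrt_lt_R0 _ qx1). assert (sx2 := sqrt_lt_R0 _ qx2).
  assert (sy1 := sqrt_lt_R0 _ qy1). assert (sy2 := sqrt_lt_R0 _ qy2).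
  apply (f_equal De1) in Hcos1. apply (f_equal De2) in Hcos2.
  unfold Ddiv, Mnorm in Hcos1, Hcos2.
  destruct (Dcos_e (mkD ((th1 + th2) / 2) ((th1 - th2) / 2))) as [C1 C2].
  assert (W1 : De1 (mkD ((th1 + th2) / 2) ((th1 - th2) / 2)) = th1) by (unfold De1; simpl; field).
  assert (W2 : De2 (mkD ((th1 + th2) / 2) ((th1 - th2) / 2)) = th2) by (unfold De2; simpl; field).
  rewrite W1 in C1. rewrite W2 in C2.
  destruct (Hre _ HVx1) as [X11 X12]. destruct (Hre _ HVx2) as [X21 X22].
  destruct (Hre _ HVy1) as [Y11 Y12]. destruct (Hre _ HVy2) as [Y21 Y22].
  destruct (Hre _ HVxy1) as [XY11 XY12]. destruct (Hre _ HVxy2) as [XY21 XY22].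
  assert (Hne : forall a b, 0 < a -> 0 < b -> sqrt a * sqrt b <> 0).
  { intros a b ha hb. apply Rgt_not_eq. apply Rmult_lt_0_compat; apply sqrt_lt_R0; assumption. }
  rewrite De1_real, De1_mul, De1_inv, De1_mul, !De1_sqrt, X11, Y11, XY11, <- AX, <- AY in Hcos1;
    rewrite ?De1_mul, ?De2_mul, ?De1_sqrt, ?De2_sqrt, ?X11, ?X12, ?Y11, ?Y12, <- ?AX, <- ?AY; auto.
  rewrite De2_real, De2_mul, De2_inv, De2_mul, !De2_sqrt, X22, Y22, XY22, <- BX, <- BY in Hcos2;
    rewrite ?De1_mul, ?De2_mul, ?De1_sqrt, ?De2_sqrt, ?X21, ?X22, ?Y21, ?Y22, <- ?BX, <- ?BY; auto.
  unfold Ddiv.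
  apply D_ext.
  - rewrite C1, De1_mul, De1_inv, De1_mul, !De1_sqrt, AXY, Hcos1; auto;
      rewrite ?De1_mul, ?De2_mul, ?De1_sqrt, ?De2_sqrt; auto.
  - rewrite C2, De2_mul, De2_inv, De2_mul, !De2_sqrt, BXY, Hcos2; auto;
      rewrite ?De1_mul, ?De2_mul, ?De1_sqrt, ?De2_sqrt; auto.
Qed.
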